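(* Let $(R,\mathfrak{m})$ be a commutative Artinian local ring with identity, $\mathfrak{m}\neq0$ and $\mathfrak{m}^2=0$. For every integer $n\ge6$, $|R|>4$ if and only if $n-3\in L(x^n)$.
   Context: A nonunit polynomial in $R[x]$ is irreducible if in any factorization into two polynomials one factor is a unit of $R[x]$. A positive integer $k$ is a length of $f$ if $f$ is a product of $k$ irreducible polynomials of $R[x]$; $L(f)$ denotes the set of lengths of $f$. (Since $\mathfrak m\ne 0$, $|R|\ge 4$.) *)

(* Defs.v *)
From HB Require Import structures.
From mathcomp Require Import all_boot all_order all_algebra.
Set Implicit Arguments. Unset Strict Implicit. Unset Printing Implicit Defensive.
Import GRing.Theory.
Local Open Scope ring_scope.

Definition is_ideal (R : comNzRingType) (I : R -> Prop) : Prop :=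
  [/\ I 0, (forall x y, I x -> I y -> I (x + y)) & (forall r x, I x -> I (r * x))].

Definition artinian (R : comNzRingType) : Prop :=
  forall I : nat -> R -> Prop,
    (forall n, is_ideal (I n)) ->
    (forall n x, I n.+1 x -> I n x) ->
    exists N, forall n, (N <= n)%N -> forall x, I n x <-> I N x.

(* Local ring: the nonunits are closed under addition (hence form the unique
   maximal ideal m). *)
Definition local_ring (R : comUnitRingType) : Prop :=
  forall x y : R, x \isn't a GRing.unit -> y \isn't a GRing.unit ->
    (x + y) \isn't a GRing.unit.

Definition poly_unit (R : comNzRingType) (p : {poly R}) : Prop :=
  exists q : {poly R}, p * q = 1.

Definition poly_irreducible (R : comNzRingType) (f : {poly R}) : Prop :=
  ~ poly_unit f /\
  forall g h : {poly R}, f = g * h -> poly_unit g \/ poly_unit h.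

Definition is_length (R : comNzRingType) (f : {poly R}) (k : nat) : Prop :=
  (0 < k)%N /\
  exists s : seq {poly R},
    size s = k /\ (forall g, g \in s -> poly_irreducible g) /\
    f = \prod_(g <- s) g.

(* Main.v *)
Require Import Defs.
From HB Require Import structures.
From mathcomp Require Import all_boot all_order all_algebra.
From mathcomp Require Import ring zify.
Set Implicit Arguments. Unset Strict Implicit. Unset Printing Implicit Defensive.
Import GRing.Theory.
Local Open Scope ring_scope.

Definition loc (R : comUnitRingType) : Prop :=
  forall x y : R, x \isn't a GRing.unit -> y \isn't a GRing.unit ->
    (x + y) \isn't a GRing.unit.
Definition sqz (R : comUnitRingType) : Prop :=
  forall x y : R, x \isn't a GRing.unit -> y \isn't a GRing.unit -> x * y = 0.

Lemma nu0 (R : comUnitRingType) : (0:R) \isn't a GRing.unit.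
Proof. by rewrite unitr0. Qed.

Lemma nuMl (R : comUnitRingType) (x y : R) : x \isn't a GRing.unit -> (y * x) \isn't a GRing.unit.
Proof. by move=> hx; rewrite unitrM negb_and hx orbT. Qed.

Lemma nuMr (R : comUnitRingType) (x y : R) : x \isn't a GRing.unit -> (x * y) \isn't a GRing.unit.
Proof. by move=> hx; rewrite unitrM negb_and hx. Qed.

Lemma uD (R : comUnitRingType) (hl : loc R) (u x : R) :
  u \is a GRing.unit -> x \isn't a GRing.unit -> (u + x) \is a GRing.unit.
Proof.
move=> hu hx; apply/negPn/negP => h.
have h2 := hl (u + x) (- x) h; rewrite unitrN in h2.
by move: (h2 hx); rewrite addrK hu.
Qed.

Lemma nusum (R : comUnitRingType) (hl : loc R) (I : Type) (r : seq I) (P : pred I) (F : I -> R) :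
  (forall i, P i -> F i \isn't a GRing.unit) -> (\sum_(i <- r | P i) F i) \isn't a GRing.unit.
Proof.
move=> h; apply: (big_ind (fun x : R => x \isn't a GRing.unit)) => //; first exact: nu0.
all: by [move=> x y; apply: hl | auto].
Qed.

Definition allm (R : comUnitRingType) (p : {poly R}) := forall i, p`_i \isn't a GRing.unit.
Definition topU (R : comUnitRingType) (p : {poly R}) i :=
  p`_i \is a GRing.unit /\ forall j, (i < j)%N -> p`_j \isn't a GRing.unit.
Definition botU (R : comUnitRingType) (p : {poly R}) i :=
  p`_i \is a GRing.unit /\ forall j, (j < i)%N -> p`_j \isn't a GRing.unit.

Lemma allmM (R : comUnitRingType) (hl : loc R) (p q : {poly R}) : allm p -> allm (p * q).
Proof. move=> hp i; rewrite coefM; apply: (nusum hl) => j _; exact: nuMr. Qed.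

Lemma allmMr (R : comUnitRingType) (hl : loc R) (p q : {poly R}) : allm q -> allm (p * q).
Proof. by move=> hq; rewrite mulrC; apply: allmM. Qed.

Lemma allm0 (R : comUnitRingType) (hs : sqz R) (p q : {poly R}) : allm p -> allm q -> p * q = 0.
Proof.
move=> hp hq; apply/polyP => i; rewrite coefM coef0 big1 // => j _; exact: hs.
Qed.

Lemma allmD (R : comUnitRingType) (hl : loc R) (p q : {poly R}) : allm p -> allm q -> allm (p + q).
Proof. by move=> hp hq i; rewrite coefD; apply: hl. Qed.

Lemma allmXn (R : comUnitRingType) (p : {poly R}) k : allm p -> allm ('X^k * p).
Proof. by move=> hp i; rewrite coefXnM; case: ifP => _ //; exact: nu0. Qed.

Lemma allm_sum (R : comUnitRingType) (hl : loc R) (I : Type) (r : seq I) (F : I -> {poly R}) :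
  (forall i, allm (F i)) -> allm (\sum_(i <- r) F i).
Proof.
move=> h j; rewrite coef_sum; apply: (nusum hl) => i _; exact: h.
Qed.

Lemma topU_mul (R : comUnitRingType) (hl : loc R) (p q : {poly R}) i k :
  topU p i -> topU q k -> topU (p * q) (i + k).
Proof.
move=> [hpi hp] [hqk hq]; split.
  rewrite coefM (bigD1 (Ordinal (ltn_addr k (ltnSn i)))) //=.
  rewrite addKn; apply: (uD hl); first by rewrite unitrM hpi hqk.
  apply: (nusum hl) => j hj.
  have hji : (j : nat) != i by apply: contraNneq hj => hj'; apply/eqP/val_inj.
  case: (ltngtP i j) => [lij|lji|eij]; first by apply: nuMr; apply: hp.
    by apply: nuMl; apply: hq; move: lji; case: j {hj hji} => j/= _; lia.
  by rewrite -eij eqxx in hji.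
move=> l hl'; rewrite coefM; apply: (nusum hl) => j _.
case: (ltnP i j) => [lij|lji]; first by apply: nuMr; apply: hp.
by apply: nuMl; apply: hq; lia.
Qed.

Lemma botU_mul (R : comUnitRingType) (hl : loc R) (p q : {poly R}) i k :
  botU p i -> botU q k -> botU (p * q) (i + k).
Proof.
move=> [hpi hp] [hqk hq]; split.
  rewrite coefM (bigD1 (Ordinal (ltn_addr k (ltnSn i)))) //=.
  rewrite addKn; apply: (uD hl); first by rewrite unitrM hpi hqk.
  apply: (nusum hl) => j hj.
  have hji : (j : nat) != i by apply: contraNneq hj => hj'; apply/eqP/val_inj.
  have := ltn_ord j.
  case: (ltngtP i j) => [lij|lji|eij] hjl; last by rewrite -eij eqxx in hji.
    by apply: nuMl; apply: hq; move: (nat_of_ord j) lij hjl => jj; lia.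
  by apply: nuMr; apply: hp.
move=> l hl'; rewrite coefM; apply: (nusum hl) => j _.
have := ltn_ord j.
case: (ltnP j i) => [lij|lji] hjl; first by apply: nuMr; apply: hp.
by apply: nuMl; apply: hq; move: (nat_of_ord j) lji hjl hl' => jj; lia.
Qed.

Lemma topU_uniq (R : comUnitRingType) (p : {poly R}) i j : topU p i -> topU p j -> i = j.
Proof.
move=> [hi hi'] [hj hj']; case: (ltngtP i j) => // h.
  by have := hi' _ h; rewrite hj.
by have := hj' _ h; rewrite hi.
Qed.

Lemma botU_uniq (R : comUnitRingType) (p : {poly R}) i j : botU p i -> botU p j -> i = j.
Proof.
move=> [hi hi'] [hj hj']; case: (ltngtP i j) => // h.
  by have := hj' _ h; rewrite hi.
by have := hi' _ h; rewrite hj.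
Qed.

Lemma bot_le_top (R : comUnitRingType) (p : {poly R}) i j : botU p i -> topU p j -> (i <= j)%N.
Proof.
move=> [hi hi'] [hj hj']; rewrite leqNgt; apply/negP => h.
by have := hi' _ h; rewrite hj.
Qed.

Lemma unit_lt_size (R : comUnitRingType) (p : {poly R}) i : p`_i \is a GRing.unit -> (i < size p)%N.
Proof.
move=> h; rewrite ltnNge; apply/negP => h'; move: h; by rewrite nth_default // unitr0.
Qed.

Lemma exists_topU (R : comUnitRingType) (p : {poly R}) :
  (exists i, p`_i \is a GRing.unit) -> exists i, topU p i.
Proof.
move=> ex.
have ub : forall i, (fun i => p`_i \is a GRing.unit) i -> (i <= size p)%N.
  by move=> i /unit_lt_size /ltnW.
case: (ex_maxnP ex ub) => i hi hmax; exists i; split => // j hj.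
by apply/negP => hj'; have := hmax _ hj'; lia.
Qed.

Lemma exists_botU (R : comUnitRingType) (p : {poly R}) :
  (exists i, p`_i \is a GRing.unit) -> exists i, botU p i.
Proof.
move=> ex.
case: (ex_minnP ex) => i hi hmin; exists i; split => // j hj.
by apply/negP => hj'; have := hmin _ hj'; lia.
Qed.

Lemma topU1 (R : comUnitRingType) : topU (1 : {poly R}) 0.
Proof. split; first by rewrite coef1 unitr1. by move=> j hj; rewrite coef1; case: j hj => // j _; exact: nu0. Qed.
Lemma botU1 (R : comUnitRingType) : botU (1 : {poly R}) 0.
Proof. by split; first by rewrite coef1 unitr1. Qed.

From Stdlib Require Import Classical.

Lemma not_allm (R : comUnitRingType) (p : {poly R}) : ~ allm p -> exists i, p`_i \is a GRing.unit.
Proof.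
move=> h; apply: NNPP => h'; apply: h => i; apply/negP => hi; apply: h'; by exists i.
Qed.

Lemma factor_top (R : comUnitRingType) (hl : loc R) (f g h : {poly R}) t :
  f = g * h -> topU f t -> exists i k, [/\ topU g i, topU h k & t = (i + k)%N].
Proof.
move=> fgh ft.
have eg : exists i, g`_i \is a GRing.unit.
  apply: not_allm => ag; case: ft => + _; rewrite fgh.
  by move: (allmM hl h ag t) => /negPf ->.
have eh : exists i, h`_i \is a GRing.unit.
  apply: not_allm => ah; case: ft => + _; rewrite fgh.
  by move: (allmMr hl g ah t) => /negPf ->.
case: (exists_topU eg) => i hi; case: (exists_topU eh) => k hk.
exists i, k; split => //; apply: (topU_uniq ft); rewrite fgh; exact: topU_mul.
Qed.

Lemma factor_bot (R : comUnitRingType) (hl : loc R) (f g h : {poly R}) t :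
  f = g * h -> botU f t -> exists i k, [/\ botU g i, botU h k & t = (i + k)%N].
Proof.
move=> fgh ft.
have eg : exists i, g`_i \is a GRing.unit.
  apply: not_allm => ag; case: ft => + _; rewrite fgh.
  by move: (allmM hl h ag t) => /negPf ->.
have eh : exists i, h`_i \is a GRing.unit.
  apply: not_allm => ah; case: ft => + _; rewrite fgh.
  by move: (allmMr hl g ah t) => /negPf ->.
case: (exists_botU eg) => i hi; case: (exists_botU eh) => k hk.
exists i, k; split => //; apply: (botU_uniq ft); rewrite fgh; exact: botU_mul.
Qed.

Lemma unit_of_top0 (R : comUnitRingType) (hs : sqz R) (p : {poly R}) : topU p 0 -> Defs.poly_unit p.
Proof.
move=> [h0 hj].
set u := p`_0; set g := p - u%:P.
have ag : allm g.
  move=> i; rewrite /g coefB coefC; case: i => [|i]; first by rewrite subrr nu0.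
  by rewrite subr0; apply: hj.
have gg : g * g = 0 by apply: allm0.
have pe : p = u%:P + g by rewrite /g addrC subrK.
have uv : u%:P * u^-1%:P = 1 :> {poly R} by rewrite -polyCM mulrV.
exists (u^-1%:P * (1 - u^-1%:P * g)); rewrite pe.
transitivity (u%:P * u^-1%:P * (1 - u^-1%:P * g) + u^-1%:P * g - u^-1%:P * u^-1%:P * (g * g)).
  ring.
rewrite uv gg; ring.
Qed.

Lemma unit_coef (R : comUnitRingType) (hl : loc R) (q : {poly R}) :
  Defs.poly_unit q -> forall j, (0 < j)%N -> q`_j \isn't a GRing.unit.
Proof.
move=> [r qr] j hj.
have [i [k [ti tk e]]] := factor_top hl (esym qr) (@topU1 R).
have i0 : i = 0%N by lia.
by case: ti => _; rewrite i0; apply.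
Qed.

Lemma topUXn (R : comUnitRingType) n : topU ('X^n : {poly R}) n.
Proof.
split; first by rewrite coefXn eqxx unitr1.
by move=> j hj; rewrite coefXn; case: eqP => [|_]; [lia | exact: nu0].
Qed.

Lemma botUXn (R : comUnitRingType) n : botU ('X^n : {poly R}) n.
Proof.
split; first by rewrite coefXn eqxx unitr1.
by move=> j hj; rewrite coefXn; case: eqP => [|_]; [lia | exact: nu0].
Qed.

Lemma not_unit_top (R : comUnitRingType) (hl : loc R) (f : {poly R}) t :
  (0 < t)%N -> topU f t -> ~ Defs.poly_unit f.
Proof.
move=> t0 [ht _] hu; by move: (unit_coef hl hu t0); rewrite ht.
Qed.

Lemma irrX (R : comUnitRingType) (hl : loc R) (hs : sqz R) : Defs.poly_irreducible ('X : {poly R}).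
Proof.
have tX : topU ('X : {poly R}) 1 by have := @topUXn R 1; rewrite expr1.
split; first exact: (not_unit_top hl _ tX).
move=> g h e; have [i [k [ti tk ik]]] := factor_top hl e tX.
case: i ti ik => [|i] ti ik; first by left; apply: (unit_of_top0 hs).
have k0 : k = 0%N by lia.
by right; apply: (unit_of_top0 hs); rewrite -k0.
Qed.

Lemma irrX2 (R : comUnitRingType) (hl : loc R) (hs : sqz R) (c : R) :
  c \isn't a GRing.unit -> c != 0 -> Defs.poly_irreducible ('X^2 + c%:P : {poly R}).
Proof.
move=> cn c0.
have cf : forall j, ('X^2 + c%:P : {poly R})`_j = if j == 2%N then 1 else if j == 0%N then c else 0.
  by move=> j; rewrite coefD coefXn coefC; case: j => [|[|[|j]]] //=; rewrite ?addr0 ?add0r.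
have tf : topU ('X^2 + c%:P : {poly R}) 2.
  split; first by rewrite cf unitr1.
  by move=> j hj; rewrite cf; case: eqP => [|_]; [lia| case: eqP => [|_]; [lia | exact: nu0]].
have bf : botU ('X^2 + c%:P : {poly R}) 2.
  split; first by rewrite cf unitr1.
  by move=> j hj; rewrite cf; case: eqP => [|_]; [lia| case: eqP => // _; exact: nu0].
split; first exact: (not_unit_top hl _ tf).
move=> g h e; have [i [k [ti tk ik]]] := factor_top hl e tf.
have [i' [k' [bi bk ik']]] := factor_bot hl e bf.
have := bot_le_top bi ti; have := bot_le_top bk tk => le1 le2.
case: i ti ik le2 => [|i] ti ik le2; first by left; apply: (unit_of_top0 hs).
case: k tk ik le1 => [|k] tk ik le1; first by right; apply: (unit_of_top0 hs).
exfalso.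
have i1 : i' = 1%N by lia.
have k1 : k' = 1%N by lia.
have g0 : g`_0 \isn't a GRing.unit by case: bi => _; apply; lia.
have h0 : h`_0 \isn't a GRing.unit by case: bk => _; apply; lia.
move: (cf 0%N); rewrite e coef0M (hs _ _ g0 h0) /= => /eqP.
by rewrite eq_sym (negPf c0).
Qed.

Lemma allm_sum_seq (R : comUnitRingType) (hl : loc R) (I : eqType) (r : seq I) (F : I -> {poly R}) :
  (forall i, i \in r -> allm (F i)) -> allm (\sum_(i <- r) F i).
Proof.
move=> h j; rewrite coef_sum big_seq; apply: (nusum hl) => i hi; exact: h.
Qed.

Definition topi (R : comUnitRingType) (p : {poly R}) : nat :=
  \max_(i < size p | p`_i \is a GRing.unit) (i : nat).
Definition boti (R : comUnitRingType) (p : {poly R}) : nat :=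
  find (fun c : R => c \is a GRing.unit) p.

Lemma topiE (R : comUnitRingType) (p : {poly R}) i : topU p i -> topi p = i.
Proof.
move=> [hi hj]; have isz := unit_lt_size hi.
apply/eqP; rewrite eqn_leq; apply/andP; split.
  apply/bigmax_leqP => j hu; rewrite leqNgt; apply/negP => lt.
  by move: (hj _ lt); rewrite hu.
exact: (leq_bigmax_cond (Ordinal isz)).
Qed.

Lemma botiE (R : comUnitRingType) (p : {poly R}) i : botU p i -> boti p = i.
Proof.
move=> bi; apply: (botU_uniq _ bi).
have hh : has (fun c : R => c \is a GRing.unit) p.
  case: bi => hi _; apply/(has_nthP 0); exists i => //; exact: unit_lt_size.
split; first exact: (nth_find 0 hh).
by move=> j hj; rewrite /boti; apply/negbT; apply: before_find.
Qed.

Lemma topi_spec (R : comUnitRingType) (p : {poly R}) :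
  (exists i, p`_i \is a GRing.unit) -> topU p (topi p).
Proof. by move=> /exists_topU [i hi]; rewrite (topiE hi). Qed.

Lemma boti_spec (R : comUnitRingType) (p : {poly R}) :
  (exists i, p`_i \is a GRing.unit) -> botU p (boti p).
Proof. by move=> /exists_botU [i hi]; rewrite (botiE hi). Qed.

Lemma prod_top (R : comUnitRingType) (hl : loc R) (s : seq {poly R}) :
  (forall f, f \in s -> topU f (topi f)) ->
  topU (\prod_(f <- s) f) (\sum_(f <- s) topi f).
Proof.
elim: s => [|f s IH] h; first by rewrite !big_nil; apply: topU1.
rewrite !big_cons; apply: (topU_mul hl); first by apply: h; rewrite inE eqxx.
by apply: IH => g hg; apply: h; rewrite inE hg orbT.
Qed.

Lemma prod_bot (R : comUnitRingType) (hl : loc R) (s : seq {poly R}) :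
  (forall f, f \in s -> botU f (boti f)) ->
  botU (\prod_(f <- s) f) (\sum_(f <- s) boti f).
Proof.
elim: s => [|f s IH] h; first by rewrite !big_nil; apply: botU1.
rewrite !big_cons; apply: (botU_mul hl); first by apply: h; rewrite inE eqxx.
by apply: IH => g hg; apply: h; rewrite inE hg orbT.
Qed.

Lemma sum_eq_le (T : eqType) (s : seq T) (F G : T -> nat) :
  (forall x, x \in s -> (F x <= G x)%N) ->
  (\sum_(x <- s) F x = \sum_(x <- s) G x)%N -> forall x, x \in s -> F x = G x.
Proof.
elim: s => [|y s IH] hle heq x //.
rewrite !big_cons in heq.
have h1 : (F y <= G y)%N by apply: hle; rewrite inE eqxx.
have h2 : (\sum_(x <- s) F x <= \sum_(x <- s) G x)%N.
  rewrite big_seq_cond [X in (_ <= X)%N]big_seq_cond; apply: leq_sum => z /andP [hz _].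
  by apply: hle; rewrite inE hz orbT.
rewrite inE => /orP [/eqP -> | hx]; first lia.
apply: IH => //; last lia.
by move=> z hz; apply: hle; rewrite inE hz orbT.
Qed.

Lemma mem_le_sum (T : eqType) (s : seq T) (F : T -> nat) x :
  x \in s -> (F x <= \sum_(y <- s) F y)%N.
Proof. by move=> hx; rewrite (big_rem x hx) /= leq_addr. Qed.

Lemma prod_unit (R : comUnitRingType) (I : Type) (s : seq I) (F : I -> R) :
  (forall i, F i \is a GRing.unit) -> (\prod_(i <- s) F i) \is a GRing.unit.
Proof.
move=> h; apply: (big_ind (fun x : R => x \is a GRing.unit)) => //; first exact: unitr1.
by move=> x y hx hy; rewrite unitrM hx hy.
Qed.

Definition uf (R : comUnitRingType) (f : {poly R}) := f`_(topi f).
Definition gf (R : comUnitRingType) (f : {poly R}) := f - (uf f)%:P * 'X^(topi f).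

Lemma prodF (R : comUnitRingType) (hl : loc R) (hs : sqz R)
  (act : forall u x : R, u \is a GRing.unit -> x \isn't a GRing.unit -> u * x = x)
  (s : seq {poly R}) :
  (forall f, f \in s -> uf f \is a GRing.unit /\ allm (gf f)) ->
  \prod_(f <- s) f = (\prod_(f <- s) uf f)%:P * 'X^(\sum_(f <- s) topi f) +
     \sum_(f <- s) 'X^(\sum_(h <- s) topi h - topi f) * gf f.
Proof.
have actp : forall (u : R) (p : {poly R}), u \is a GRing.unit -> allm p -> u%:P * p = p.
  by move=> u p hu hp; apply/polyP => i; rewrite coefCM act.
elim: s => [|f0 s IH] h.
  by rewrite !big_nil expr0 mulr1 addr0.
have [hu0 hg0] : uf f0 \is a GRing.unit /\ allm (gf f0) by apply: h; rewrite inE eqxx.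
have h' : forall f, f \in s -> uf f \is a GRing.unit /\ allm (gf f).
  by move=> f hf; apply: h; rewrite inE hf orbT.
have hU : (\prod_(f <- s) uf f) \is a GRing.unit.
  rewrite big_seq; apply: (big_ind (fun x : R => x \is a GRing.unit)) => //; first exact: unitr1.
    by move=> x y hx hy; rewrite unitrM hx hy.
  by move=> f hf; case: (h' f hf).
rewrite !big_cons (IH h').
set A := (\sum_(f <- s) topi f)%N.
set G := \sum_(f <- s) 'X^(A - topi f) * gf f.
have aG : allm G.
  by apply: (allm_sum_seq hl) => f hf; apply: allmXn; case: (h' f hf).
have e1 : \sum_(f <- s) 'X^(topi f0 + A - topi f) * gf f = 'X^(topi f0) * G.
  rewrite /G big_distrr big_seq [in RHS]big_seq; apply: eq_bigr => f hf.
  rewrite /= mulrA -exprD; congr (_ ^+ _ * _).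
  have := mem_le_sum (@topi R) hf; rewrite -/A; lia.
rewrite e1 addKn.
have ef0 : f0 = (uf f0)%:P * 'X^(topi f0) + gf f0 by rewrite /gf addrC subrK.
set u0 := uf f0; set U := \prod_(f <- s) uf f; set g0 := gf f0.
rewrite [in LHS]ef0 -/u0 -/g0 polyCM exprD.
have z1 : g0 * G = 0 by apply: allm0.
have z2 : u0%:P * ('X^(topi f0) * G) = 'X^(topi f0) * G by apply: actp => //; apply: allmXn.
have z3 : U%:P * ('X^A * g0) = 'X^A * g0 by apply: actp => //; apply: allmXn.
transitivity (u0%:P * U%:P * ('X^(topi f0) * 'X^A) + u0%:P * ('X^(topi f0) * G) + U%:P * ('X^A * g0) + g0 * G).
  ring.
rewrite z1 z2 z3; ring.
Qed.

Lemma topUX (R : comUnitRingType) : topU ('X : {poly R}) 1.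
Proof. by have := @topUXn R 1; rewrite expr1. Qed.

Lemma irr_c0 (R : comUnitRingType) (hl : loc R) (f : {poly R}) :
  Defs.poly_irreducible f -> (1 < topi f)%N -> topU f (topi f) -> f`_0 != 0.
Proof.
move=> [_ irr] t1 [tu _]; apply/eqP => f00.
have e : f = drop_poly 1 f * 'X.
  rewrite -{1}(poly_take_drop 1 f) expr1.
  have -> : take_poly 1 f = 0.
    by apply/polyP => i; rewrite coef_take_poly coef0; case: i => [|i] //=.
  by rewrite add0r.
case: (irr _ _ e) => hu.
  have h2 := unit_coef hl hu (j := (topi f - 1)%N); rewrite coef_drop_poly in h2.
  have e2 : (topi f - 1 + 1 = topi f)%N by lia.
  rewrite e2 tu in h2; suff : (0 < topi f - 1)%N by move/h2. lia.
exact: (not_unit_top hl (ltn0Sn 0) (@topUX R) hu).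
Qed.

Lemma sum_if_count (R : comUnitRingType) (T : Type) (s : seq T) (P : pred T) (c : R) :
  \sum_(f <- s) (if P f then c else 0) = c *+ count P s.
Proof.
elim: s => [|x s IH]; first by rewrite big_nil.
by rewrite big_cons IH /=; case: (P x); rewrite ?add0r // add1n mulrS.
Qed.

Lemma muln_odd (R : comUnitRingType) (c : R) (cc : c + c = 0) k :
  c *+ k = if odd k then c else 0.
Proof.
elim: k => [|k IH]; first by rewrite mulr0n.
rewrite mulrS IH /=; case: (odd k) => /=; by rewrite ?cc ?addr0.
Qed.

Lemma exists_max (T : eqType) (s : seq T) (F : T -> nat) :
  s != [::] -> exists M, (forall f, f \in s -> (F f <= M)%N) /\ exists2 f, f \in s & F f = M.
Proof.
elim: s => [|x s IH] // _.
case: (eqVneq s [::]) => [->|sn].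
  exists (F x); split; last by exists x; rewrite ?inE.
  by move=> f; rewrite inE => /eqP ->.
have [M [hM [f hf fM]]] := IH sn.
exists (maxn (F x) M); split.
  move=> g; rewrite inE => /orP [/eqP ->|hg]; first exact: leq_maxl.
  by apply: leq_trans (hM _ hg) (leq_maxr _ _).
case: (leqP M (F x)) => hle.
  by exists x; rewrite ?inE ?eqxx //; apply/esym/maxn_idPl.
by exists f; rewrite ?inE ?hf ?orbT //; rewrite fM; apply/esym/maxn_idPr/ltnW.
Qed.

Lemma no_len (R : comUnitRingType) (hl : loc R) (hs : sqz R) (c : R)
  (cn : c \isn't a GRing.unit) (c0 : c != 0)
  (hm : forall x : R, x \isn't a GRing.unit -> x = 0 \/ x = c) (cc : c + c = 0)
  (n : nat) (hn : (6 <= n)%N) : ~ is_length ('X^n : {poly R}) (n - 3).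
Proof.
move=> [_ [s [hsz [hirr hprod]]]].
have act : forall u x : R, u \is a GRing.unit -> x \isn't a GRing.unit -> u * x = x.
  move=> u x hu hx; case: (hm x hx) => ->; first by rewrite mulr0.
  case: (hm (u * c) (nuMl u cn)) => // uc0.
  by move: c0; rewrite -(mulKr hu c) uc0 mulr0 eqxx.
have hU : forall f, f \in s -> exists i, f`_i \is a GRing.unit.
  move=> f hf; apply: not_allm => af.
  have := allmM hl (\prod_(g <- rem f s) g) af n.
  have e : \prod_(g <- s) g = f * \prod_(g <- rem f s) g by rewrite (big_rem f hf).
  by rewrite -e -hprod coefXn eqxx unitr1.
have tf : forall f, f \in s -> topU f (topi f) by move=> f /hU /topi_spec.
have bf : forall f, f \in s -> botU f (boti f) by move=> f /hU /boti_spec.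
have sumT : (\sum_(f <- s) topi f)%N = n.
  by apply: (topU_uniq (prod_top hl tf)); rewrite -hprod; apply: topUXn.
have sumB : (\sum_(f <- s) boti f)%N = n.
  by apply: (botU_uniq (prod_bot hl bf)); rewrite -hprod; apply: botUXn.
have eTB : forall f, f \in s -> boti f = topi f.
  apply: sum_eq_le; last by rewrite sumT sumB.
  by move=> f hf; apply: bot_le_top (bf f hf) (tf f hf).
have dec : forall f, f \in s -> uf f \is a GRing.unit /\ allm (gf f).
  move=> f hf; split; first by case: (tf f hf).
  move=> j; rewrite /gf coefB coefCM coefXn.
  case: (ltngtP j (topi f)) => [lt|gt|->]; last by rewrite mulr1 subrr nu0.
    rewrite mulr0 subr0; case: (bf f hf) => _; apply; by rewrite eTB.
  rewrite mulr0 subr0; case: (tf f hf) => _; exact.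
have pos : forall f, f \in s -> (0 < topi f)%N.
  move=> f hf; rewrite lt0n; apply/negP => /eqP t0.
  case: (hirr f hf) => hnu _; apply: hnu; apply: (unit_of_top0 hs); rewrite -t0; exact: tf.
have f0c : forall f, f \in s -> (1 < topi f)%N -> f`_0 = c.
  move=> f hf t1.
  have fn : f`_0 \isn't a GRing.unit by case: (bf f hf) => _; apply; rewrite eTB //; lia.
  case: (hm _ fn) => // f00.
  by move: (irr_c0 hl (hirr f hf) t1 (tf f hf)); rewrite f00 eqxx.
move: hprod; rewrite (prodF hl hs act dec) sumT => hprod.
have sn : s != [::] by apply/eqP => s0; move: hsz; rewrite s0 /=; lia.
have [M [hM [f1 hf1 f1M]]] := exists_max (@topi R) sn.
have Mn : (M <= n)%N by rewrite -f1M -sumT; apply: mem_le_sum.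
have M2 : (2 <= M)%N.
  rewrite leqNgt; apply/negP => M1.
  have : (\sum_(f <- s) topi f)%N = (\sum_(f <- s) 1)%N.
    rewrite big_seq [in RHS]big_seq; apply: eq_bigr => f hf.
    have := hM f hf; have := pos f hf; lia.
  rewrite sumT sum1_size hsz; lia.
have := congr1 (fun p : {poly R} => p`_(n - M)%N) hprod.
rewrite /= coefXn coefD coefCM coefXn coef_sum.
have -> : ((n - M)%N == n) = false by apply/negbTE; rewrite neq_ltn; apply/orP; left; lia.
rewrite mulr0 add0r.
have -> : \sum_(f <- s) ('X^(n - topi f) * gf f)`_(n - M)%N =
          \sum_(f <- s) (if topi f == M then c else 0).
  rewrite big_seq [in RHS]big_seq; apply: eq_bigr => f hf.
  have hfM := hM f hf; have hfn : (topi f <= n)%N by rewrite -sumT; apply: mem_le_sum.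
  rewrite coefXnM; case: eqP => [eM|neM].
    have -> : (n - M < n - topi f)%N = false by apply/negbTE; rewrite -leqNgt; lia.
    have -> : (n - M - (n - topi f) = 0)%N by lia.
    rewrite /gf coefB coefCM coefXn.
    have -> : (0 == topi f) = false by apply/negbTE; rewrite eq_sym -lt0n; exact: pos.
    by rewrite mulr0 subr0 f0c // eM.
  by have -> : (n - M < n - topi f)%N by lia.
rewrite sum_if_count muln_odd //.
set cnt := count (fun f => topi f == M) s.
have cnt1 : (0 < cnt)%N by rewrite -has_count; apply/hasP; exists f1 => //; rewrite f1M.
move=> hz; have hodd : odd cnt = false.
  move: hz; case: (odd cnt) => // /esym/eqP; by rewrite mulr0n (negPf c0).
set cntn := count (fun f => topi f != M) s.
have e1 : n = (M * cnt + \sum_(f <- s | topi f != M) topi f)%N.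
  rewrite -{1}sumT (bigID (fun f => topi f == M)) /=; congr (_ + _)%N.
  rewrite (eq_bigr (fun _ => M)); last by move=> f /eqP.
  by rewrite big_const_seq iter_addn_0.
have e2 : (n - 3 = cnt + cntn)%N.
  rewrite -hsz -sum1_size (bigID (fun f => topi f == M)) /= !sum1_count //.
have e3 : (cntn <= \sum_(f <- s | topi f != M) topi f)%N.
  rewrite /cntn -sum1_count big_seq_cond [X in (_ <= X)%N]big_seq_cond.
  by apply: leq_sum => f /andP [hf _]; apply: pos.
have e4 : M = 2%N -> (\sum_(f <- s | topi f != M) topi f)%N = cntn.
  move=> M2'; rewrite /cntn -sum1_count big_seq_cond [in RHS]big_seq_cond.
  apply: eq_bigr => f /andP [hf /eqP hne]; have := hM f hf; have := pos f hf; lia.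
have e5 : (3 <= M)%N -> (3 * cnt <= M * cnt)%N by move=> h3; apply: leq_mul.
have := odd_double_half cnt; rewrite hodd add0n -muln2.
set k := cnt./2 => ek.
set S := (\sum_(f <- s | topi f != M) topi f)%N in e1 e3 e4.
case: (ltngtP M 2) => [lt|gt|eq]; [lia | | ].
  have := e5 gt; lia.
have := e4 eq; rewrite eq in e1; lia.
Qed.

Lemma neq_un (R : comUnitRingType) (a b : R) :
  a \is a GRing.unit -> b \isn't a GRing.unit -> (a == b) = false.
Proof. by move=> ha hb; apply/negbTE; apply: contraNneq hb => <-. Qed.

Lemma five_distinct (R : comUnitRingType) (hl : loc R) (c x : R) :
  c \isn't a GRing.unit -> c != 0 -> x \isn't a GRing.unit -> x != 0 -> x != c ->
  exists s : seq R, uniq s /\ (4 < size s)%N.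
Proof.
move=> cn c0 xn x0 xc.
have u1 : (1 : R) \is a GRing.unit by exact: unitr1.
have u1c : (1 + c) \is a GRing.unit by apply: (uD hl).
exists [:: 0; c; x; 1; 1 + c]; split => //=.
rewrite !inE !negb_or !andbT.
rewrite eq_sym c0 eq_sym x0 (eq_sym 0 1) oner_neq0 (eq_sym 0) (neq_un u1c (@nu0 R)).
rewrite eq_sym xc (eq_sym c 1) (neq_un u1 cn) (eq_sym c) (neq_un u1c cn).
rewrite (eq_sym x 1) (neq_un u1 xn) (eq_sym x) (neq_un u1c xn).
rewrite -{1}(addr0 1) (inj_eq (addrI _)) eq_sym c0.
done.
Qed.

Lemma le4 (R : comUnitRingType) (hl : loc R) (c : R) :
  c \isn't a GRing.unit -> c != 0 -> (forall x : R, x \isn't a GRing.unit -> x = 0 \/ x = c) ->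
  ~ exists s : seq R, uniq s /\ (4 < size s)%N.
Proof.
move=> cn c0 hm [s [us ss]].
have sub : {subset s <= [:: 0; c; 1; 1 + c]}.
  move=> r _; rewrite !inE.
  case: (boolP (r \is a GRing.unit)) => ru; last first.
    by case: (hm r ru) => ->; rewrite eqxx ?orbT.
  have r1 : (r - 1) \isn't a GRing.unit.
    apply/negP => r1u.
    have h1 : (r - 1) * c \isn't a GRing.unit by apply: nuMl.
    case: (hm _ h1) => e.
      by move: c0; rewrite -(mulKr r1u c) e mulr0 eqxx.
    have : r * c \isn't a GRing.unit by apply: nuMl.
    move=> rcn; case: (hm _ rcn) => e'.
      by move: c0; rewrite -(mulKr ru c) e' mulr0 eqxx.
    move: e; rewrite mulrBl e' mul1r subrr => /esym/eqP; by rewrite (negPf c0).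
  case: (hm _ r1) => e.
    by move/eqP: e; rewrite subr_eq0 => ->; rewrite !orbT.
  by move/eqP: e; rewrite subr_eq addrC => ->; rewrite !orbT.
have := uniq_leq_size us sub; rewrite /=; lia.
Qed.

Lemma yes_len (R : comUnitRingType) (hl : loc R) (hs : sqz R) (c1 c2 c3 : R)
  (n1 : c1 \isn't a GRing.unit) (n2 : c2 \isn't a GRing.unit) (n3 : c3 \isn't a GRing.unit)
  (z1 : c1 != 0) (z2 : c2 != 0) (z3 : c3 != 0) (sum0 : c1 + c2 + c3 = 0)
  (n : nat) (hn : (6 <= n)%N) : is_length ('X^n : {poly R}) (n - 3).
Proof.
split; first lia.
exists ([:: 'X^2 + c1%:P; 'X^2 + c2%:P; 'X^2 + c3%:P] ++ nseq (n - 6) 'X).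
split; first by rewrite size_cat size_nseq /=; lia.
split.
  move=> g; rewrite mem_cat => /orP [|]; last first.
    by move/nseqP => [-> _]; apply: irrX.
  by rewrite !inE => /or3P [|/eqP ->|/eqP ->]; [move/eqP ->|..]; apply: irrX2.
rewrite big_cat /= !big_cons big_nil mulr1 big_nseq.
have -> : iter (n - 6) (GRing.mul 'X) 1 = 'X^(n - 6) :> {poly R}.
  elim: (n - 6)%N => [|k IH] /=; first by rewrite expr0.
  by rewrite IH exprS.
have p12 : c1%:P * c2%:P = 0 :> {poly R} by rewrite -polyCM hs.
have p13 : c1%:P * c3%:P = 0 :> {poly R} by rewrite -polyCM hs.
have p23 : c2%:P * c3%:P = 0 :> {poly R} by rewrite -polyCM hs.
have s0 : c1%:P + c2%:P + c3%:P = 0 :> {poly R} by rewrite -!polyCD sum0.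
symmetry; transitivity ((('X^2)^+3 + (c1%:P + c2%:P + c3%:P) * ('X^2)^+2 + (c1%:P * c2%:P + c1%:P * c3%:P + c2%:P * c3%:P) * 'X^2 + (c1%:P * c2%:P) * c3%:P) * 'X^(n - 6) : {poly R}).
  ring.
rewrite p12 p13 p23 s0.
transitivity (('X^2)^+3 * 'X^(n - 6) : {poly R}); first ring.
rewrite -exprM -exprD; congr (_ ^+ _); lia.
Qed.

Unset Implicit Arguments.
Theorem proposition4p11 (R : comUnitRingType)
  (hart : artinian R) (hloc : local_ring R)
  (hm0 : exists x : R, x \isn't a GRing.unit /\ x != 0)
  (hm2 : forall x y : R, x \isn't a GRing.unit -> y \isn't a GRing.unit -> x * y = 0)
  (n : nat) (hn : (6 <= n)%N) :
  (exists s : seq R, uniq s /\ (4 < size s)%N) <-> is_length ('X^n : {poly R}) (n - 3).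
Proof.
have hl : loc R := hloc.
have hs : sqz R := hm2.
case: hm0 => c [cn c0].
split.
  move=> h5.
  have [x [xn x0 xc]] : exists x : R, [/\ x \isn't a GRing.unit, x != 0 & x != c].
    apply: NNPP => hno; apply: (le4 hl cn c0) h5 => x xn.
    apply: NNPP => hx; apply: hno; exists x; split => //.
      by apply/eqP => e; apply: hx; left.
    by apply/eqP => e; apply: hx; right.
  have nN : forall y : R, y \isn't a GRing.unit -> - y \isn't a GRing.unit by move=> y; rewrite unitrN.
  case: (eqVneq (x + c) 0) => hxc.
    have cc : c + c != 0.
      apply: contraNneq xc => e.
      have ex : x = - c by apply/eqP; rewrite -addr_eq0 hxc.
      have ec : c = - c by apply/eqP; rewrite -addr_eq0 e.
      by rewrite ex -ec.
    apply: (yes_len hl hs (c1 := c) (c2 := c) (c3 := - (c + c))) => //.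
    - by apply: nN; apply: hl.
    - by rewrite oppr_eq0.
    - by rewrite subrr.
  apply: (yes_len hl hs (c1 := x) (c2 := c) (c3 := - (x + c))) => //.
  - by apply: nN; apply: hl.
  - by rewrite oppr_eq0.
  - by rewrite subrr.
move=> hlen; apply: NNPP => h5.
have hm : forall x : R, x \isn't a GRing.unit -> x = 0 \/ x = c.
  move=> x xn; apply: NNPP => hx; apply: h5.
  apply: (five_distinct hl cn c0 xn).
    by apply/eqP => e; apply: hx; left.
  by apply/eqP => e; apply: hx; right.
have cc : c + c = 0.
  case: (hm (c + c) (hl _ _ cn cn)) => // e.
  by move: c0; rewrite -(addrK c c) e subrr eqxx.
exact: (no_len hl hs cn c0 hm cc hn hlen).
Qed.
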